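(* Every instance of $P_n\,|\,\mathrm{conc}, p_j=1\,|\,*$ in which the objective $*$ is a regular scheduling criterion has an optimal schedule $C$ with $C_{\max}=\max_j C_j\le tw\cdot\log n+1$, where $tw$ is the treewidth of the conflict graph and $n$ the number of jobs.
   Context: In $P_n\,|\,\mathrm{conc}, p_j=1\,|\,*$, jobs $\{1,\dots,n\}$ (possibly with due dates and weights) all have processing time $1$ and release time $0$; there is a conflict graph $G$ on the jobs, and a schedule $C:\{1,\dots,n\}\to\mathbb{N}_{\ge1}$ is feasible iff $C(i)\ne C(j)$ for every edge $\{i,j\}$ of $G$. An optimal schedule is a feasible schedule minimizing the objective. A scheduling criterion is regular if it is non-decreasing in the completion times of the jobs (decreasing a job's completion time never increases the objective value). $\log$ is base $2$. *)

(* Defs.v *)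
From HB Require Import structures.
From mathcomp Require Import all_boot all_order all_algebra.
From mathcomp Require Import reals exp.
Set Implicit Arguments. Unset Strict Implicit. Unset Printing Implicit Defensive.
Import Order.TTheory GRing.Theory Num.Theory.

Definition simple_graph (V : finType) (e : rel V) : Prop :=
  symmetric e /\ irreflexive e.

Definition is_tree (T : finType) (e : rel T) : Prop :=
  [/\ 0 < #|T|, simple_graph e,
      (forall x y : T, connect e x y) &
      (forall s : seq T, 3 <= size s -> uniq s -> ~~ cycle e s)].

Definition tree_decomposition (V : finType) (G : rel V)
  (T : finType) (eT : rel T) (B : T -> {set V}) : Prop :=
  [/\ is_tree eT,
      (forall v : V, exists t : T, v \in B t),
      (forall u v : V, G u v -> exists t : T, (u \in B t) && (v \in B t)) &
      (forall (v : V) (t1 t2 : T), v \in B t1 -> v \in B t2 ->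
         connect [rel a b | [&& eT a b, v \in B a & v \in B b]] t1 t2)].

Definition td_width (V T : finType) (B : T -> {set V}) : nat :=
  (\max_(t : T) #|B t|).-1.

Definition is_treewidth (V : finType) (G : rel V) (k : nat) : Prop :=
  (exists (T : finType) (eT : rel T) (B : T -> {set V}),
      tree_decomposition G eT B /\ td_width B = k) /\
  (forall (T : finType) (eT : rel T) (B : T -> {set V}),
      tree_decomposition G eT B -> k <= td_width B).

(* a schedule assigns to each job j its completion time C j >= 1 *)
Definition schedule (n : nat) := 'I_n -> nat.

Definition feasible (n : nat) (G : rel 'I_n) (C : schedule n) : Prop :=
  (forall j, 0 < C j) /\ (forall i j, G i j -> C i != C j).

Definition regular (R : realType) (n : nat) (f : schedule n -> R) : Prop :=
  forall C C' : schedule n, (forall j, 0 < C j) -> (forall j, 0 < C' j) ->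
    (forall j, C j <= C' j)%N -> (f C <= f C')%R.

Definition optimal (R : realType) (n : nat) (G : rel 'I_n)
  (f : schedule n -> R) (C : schedule n) : Prop :=
  feasible G C /\ forall C', feasible G C' -> (f C <= f C')%R.

Definition Cmax (n : nat) (C : schedule n) : nat := \max_(j : 'I_n) C j.

Definition log2 (R : realType) (x : R) : R := (ln x / ln 2)%R.

(* Main.v *)
Require Import Defs.
From HB Require Import structures.
From mathcomp Require Import all_boot all_order all_algebra.
From mathcomp Require Import reals exp.
From mathcomp Require Import zify.
From Stdlib Require Import Classical FunctionalExtensionality.
Set Implicit Arguments. Unset Strict Implicit. Unset Printing Implicit Defensive.

Definition restr (T : finType) (U : {set T}) (e : rel T) : rel T :=
  [rel a b | [&& e a b, a \in U & b \in U]].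

Lemma shortcut (T : finType) (e : rel T) (W W' : {set T}) (l p u w : T) :
  (forall x, (x \in W') = (x \in W) && (x != l)) ->
  (forall x, x \in W -> e l x -> x = p) -> (forall x, x \in W -> e x l -> x = p) ->
  u != l -> w != l -> connect (restr W e) u w -> connect (restr W' e) u w.
Proof.
move=> HW' Hout Hin ul wl /connectP [s ps wE]; subst w.
case/shortenP: ps wl => s' ps' us' _ wl.
apply/connectP; exists s' => //.
have lns : l \notin u :: s'.
  apply/negP => ls.
  have ls' : l \in s' by move: ls; rewrite inE eq_sym (negbTE ul).
  move: ps' us' wl; case/splitPr: ls' => s1 s2.
  case: s2 => [|y s3]; first by move=> _ _; rewrite last_cat /= eqxx.
  rewrite cat_path => /andP [_ Hp] us' _.
  move: Hp => /= /and3P [/and3P [e1 i1 _] /and3P [e2 _ i2] _].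
  have h1 := Hin _ i1 e1. have h2 := Hout _ i2 e2.
  move: us'; rewrite -cat_cons cat_uniq => /and3P [_ /hasP [] ].
  exists y; first by rewrite !inE eqxx orbT.
  by rewrite /= h2 -h1 mem_last.
apply: (@sub_in_path _ (predC1 l) (restr W e)) => //.
- move=> a b al bl /and3P [eab aW bW].
  by rewrite /restr /= eab !HW' aW bW; rewrite !inE /= in al bl; rewrite al bl.
- apply/allP => x xs /=; apply/negP => /eqP xl; by rewrite -xl xs in lns.
Qed.

Lemma leaf (T : finType) (e : rel T) (U : {set T}) :
  symmetric e -> irreflexive e ->
  (forall s : seq T, 3 <= size s -> uniq s -> ~~ cycle e s) ->
  (forall u w, u \in U -> w \in U -> connect (restr U e) u w) ->
  1 < #|U| ->
  exists l p, [/\ l \in U, p \in U, e l p & forall w, w \in U -> e l w -> w = p].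
Proof.
move=> esym eirr acyc conU cardU.
have nbr : forall x, x \in U -> exists2 z, z \in U & e x z.
  move=> x xU.
  have [y yU yx] : exists2 y, y \in U & y != x.
    case: (boolP [exists y in U, y != x]) => [/exists_inP // | /exists_inPn H].
    have : U \subset [set x].
      apply/subsetP => y yU; rewrite inE; by have := H y yU; rewrite negbK.
    move/subset_leq_card; rewrite cards1; by rewrite leqNgt cardU.
  have := conU _ _ xU yU => /connectP [[|z s0]] /=; first by move=> _ yE; rewrite -yE eqxx in yx.
  by case/andP => /and3P [exz _ zU] _ _; exists z.
suff main : forall N, (forall s : seq T, uniq s -> size s <= N) -> forall d x s,
    uniq (x :: s) -> path (restr U e) x s -> x \in U ->
    N - size s <= d ->
    exists l p, [/\ l \in U, p \in U, e l p & forall w, w \in U -> e l w -> w = p].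
  have [x xU] : exists x, x \in U.
    have : (0 < #|U|) by apply: leq_trans cardU.
    by rewrite card_gt0 => /set0Pn.
  apply: (main #|T| _ #|T| x [::]) => //; last by rewrite subn0.
  by move=> s us; rewrite -(card_uniqP us) max_card.
move=> N bnd.
elim=> [|d IH] x s us ps xU dT.
- have := bnd _ us => /= H0; move: dT; rewrite leqn0 subn_eq0 => dT.
  by have := leq_trans H0 dT; rewrite ltnn.
case: (boolP [exists w, [&& w \in U, e x w & w \notin x :: s]]).
  case/existsP => w /and3P [wU exw wn].
  apply: (IH w (x :: s)) => //=.
  - by rewrite wn.
  - by rewrite ps /restr /= esym exw wU xU.
  - have H0 := bnd _ us; rewrite /= subnS -ltnS prednK ?subn_gt0 //.
move/existsPn => H.
case: s us ps dT H => [|z s'] us ps _ H.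
  have [z zU exz] := nbr x xU.
  have := H z; rewrite zU exz /= inE.
  by have -> : z == x = false by apply/negbTE/negP => /eqP zx; rewrite zx eirr in exz.
move: ps => /= /andP [/and3P [exz _ zU] ps'].
exists x, z; split => // w wU exw.
apply/eqP/negPn/negP => wz.
have := H w; rewrite wU exw /= negbK !inE (negbTE wz) /=.
have -> : (w == x) = false by apply/negbTE/negP => /eqP wx; rewrite wx eirr in exw.
move=> ws'.
move: us ps'; case/splitPr: ws' => s1 s2 us ps'.
suff Hc : cycle e (x :: z :: rcons s1 w).
  move: Hc; apply/negP; apply: acyc.
  - by rewrite /= size_rcons.
  - move: us; rewrite -cats1 -[x :: z :: s1 ++ w :: s2]/((x :: z :: s1) ++ w :: s2).
    rewrite -[w :: s2]/([:: w] ++ s2) catA cat_uniq => /andP [].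
    by rewrite -!cat_cons.
rewrite /cycle rcons_path; apply/andP; split; last first.
  by rewrite /= last_rcons esym.
rewrite /= exz /=.
have := sub_path (fun a b (h : restr U e a b) => (proj1 (andP h))) ps'.
rewrite cat_path => /andP [H1 /= /andP [H2 _]].
by rewrite rcons_path H1 H2.
Qed.

Section Degen.
Variables (V T : finType) (G : rel V) (eT : rel T) (B : T -> {set V}).
Hypothesis Gsym : symmetric G.
Hypothesis Girr : irreflexive G.
Hypothesis TD : tree_decomposition G eT B.

Let k := td_width B.

Lemma bag_bound t : #|B t| <= k.+1.
Proof.
rewrite /k /td_width.
have H : #|B t| <= \max_(t0 : T) #|B t0| := leq_bigmax (F := fun t0 => #|B t0|) t.
by apply: (leq_trans H); apply: leqSpred.
Qed.

Lemma finish (S : {set V}) v l : v \in S -> v \in B l ->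
  (forall u, u \in S -> G v u -> u \in B l) -> #|[set u in S | G v u]| <= k.
Proof.
move=> vS vB H.
have sub : [set u in S | G v u] \subset B l :\ v.
  apply/subsetP => u; rewrite !inE => /andP [uS Gvu].
  rewrite (H _ uS Gvu) andbT; apply/negP => /eqP uv.
  by rewrite uv Girr in Gvu.
apply: leq_trans (subset_leq_card sub) _.
have := cardsD1 v (B l); rewrite vB add1n => E.
have := bag_bound l; rewrite E ltnS //.
Qed.

Definition bagsof (v : V) : {set T} := [set t | v \in B t].

Lemma peel (S : {set V}) : S != set0 -> forall m (U : {set T}), #|U| <= m ->
  U != set0 ->
  (forall u w, u \in U -> w \in U -> connect (restr U eT) u w) ->
  (forall v, v \in S -> exists2 t, t \in U & v \in B t) ->
  (forall u v, u \in S -> v \in S -> G u v -> exists2 t, t \in U & (u \in B t) && (v \in B t)) ->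
  (forall v t1 t2, v \in S -> t1 \in U -> t2 \in U -> v \in B t1 -> v \in B t2 ->
     connect (restr (U :&: bagsof v) eT) t1 t2) ->
  exists2 v, v \in S & #|[set u in S | G v u]| <= k.
Proof.
case: TD => [[_ [eTsym eTirr] _ acyc] _ _ _].
move=> S0; elim=> [|m IH] U cU U0 conU cov edg con.
  by move: cU; rewrite leqn0 cards_eq0 (negbTE U0).
have /set0Pn [v vS] := S0.
case: (leqP #|U| 1) => cU1.
  have [l Ul] : exists l, l \in U by apply/set0Pn.
  have Ueq : forall t, t \in U -> t = l.
    move=> t tU; apply/eqP/negPn/negP => tl.
    have : [set t; l] \subset U by apply/subsetP => x; rewrite !inE => /orP [] /eqP ->.
    move/subset_leq_card; rewrite cards2 tl /= => H; have := leq_trans H cU1; by [].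
  exists v => //.
  have [t tU vt] := cov v vS; rewrite (Ueq t tU) in vt.
  apply: (finish vS vt) => u uS Gvu.
  have [t' t'U /andP [_ ut']] := edg _ _ vS uS Gvu.
  by rewrite -(Ueq t' t'U).
have [l [p [lU pU elp lleaf]]] := leaf eTsym eTirr acyc conU cU1.
case: (boolP [exists v, [&& v \in S, v \in B l & v \notin B p]]).
  case/existsP => v' /and3P [v'S v'l v'p].
  exists v' => //.
  have only : forall t, t \in U -> v' \in B t -> t = l.
    move=> t tU v't; apply/eqP/negPn/negP => tl.
    have := con v' l t v'S lU tU v'l v't.
    case/connectP => [[|x s]] /=; first by move=> _ tE; rewrite tE eqxx in tl.
    case/andP => /and3P [elx _ xUb] _ _.
    move: xUb; rewrite !inE => /andP [xU v'x].
    by rewrite -(lleaf x xU elx) v'x in v'p.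
  apply: (finish v'S v'l) => u uS Gvu.
  have [t' t'U /andP [v't' ut']] := edg _ _ v'S uS Gvu.
  by rewrite -(only t' t'U v't').
move/existsPn => Hsub.
have lp : forall v, v \in S -> v \in B l -> v \in B p.
  move=> x xS xl; have := Hsub x; rewrite xS xl /= => /negPn //.
have pl : p != l by apply/negP => /eqP pl; rewrite pl eTirr in elp.
have inl : forall x, x \in U -> eT x l -> x = p.
  by move=> x xU exl; apply: lleaf => //; rewrite eTsym.
apply: (IH (U :\ l)).
- by move: cU; rewrite (cardsD1 l U) lU add1n ltnS.
- by apply/set0Pn; exists p; rewrite !inE pl.
- move=> u w; rewrite !inE => /andP [ul uU] /andP [wl wU].
  apply: (shortcut (W := U) (l := l) (p := p)) => //.
  + by move=> x; rewrite !inE andbC.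
  + by apply: conU.
- move=> x xS; have [t tU xt] := cov x xS.
  case: (eqVneq t l) => [tl | tl].
    by exists p; rewrite ?inE ?pl //; apply: lp => //; rewrite -tl.
  by exists t; rewrite // !inE tl.
- move=> x y xS yS Gxy; have [t tU /andP [xt yt]] := edg x y xS yS Gxy.
  case: (eqVneq t l) => [tl | tl].
    exists p; rewrite ?inE ?pl //.
    by rewrite !lp // -tl.
  by exists t; rewrite ?inE ?tl ?xt ?yt.
- move=> x t1 t2 xS; rewrite !inE => /andP [t1l t1U] /andP [t2l t2U] xt1 xt2.
  have := con x t1 t2 xS t1U t2U xt1 xt2.
  apply: (shortcut (W := U :&: bagsof x) (l := l) (p := p)) => //.
  + by move=> y; rewrite !inE; case: (y == l); rewrite ?andbF ?andbT.
  + by move=> y; rewrite !inE => /andP [yU _]; apply: lleaf.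
  + by move=> y; rewrite !inE => /andP [yU _]; apply: inl.
Qed.

Lemma degen (S : {set V}) : S != set0 ->
  exists2 v, v \in S & #|[set u in S | G v u]| <= k.
Proof.
move=> S0.
case: (TD) => [[T0 _ conT _] cov edg con].
apply: (peel S0 (leqnn #|[set: T]|)).
- by rewrite -card_gt0 cardsT.
- move=> u w _ _; move: (conT u w); apply: connect_sub => x y exy.
  by apply: connect1; rewrite /restr /= exy !inE.
- by move=> v _; have [t vt] := cov v; exists t; rewrite ?inE.
- move=> u v _ _ Guv; have [t /andP [ut vt]] := edg u v Guv.
  by exists t; rewrite ?inE ?ut ?vt.
- move=> v t1 t2 _ _ _ v1 v2.
  have := con v t1 t2 v1 v2.
  apply: connect_sub => x y /= /and3P [exy vx vy].
  by apply: connect1; rewrite /restr /= exy !inE vx vy.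
Qed.

End Degen.

Section Edge.
Variables (V : finType) (G : rel V) (k : nat) (c : V -> nat).
Hypothesis Gsym : symmetric G.
Hypothesis Girr : irreflexive G.
Hypothesis Hdeg : forall S : {set V}, S != set0 ->
  exists2 v, v \in S & #|[set u in S | G v u]| <= k.

Definition down (S : {set V}) v := #|[set u in S | G v u && (c u < c v)]|.

Lemma sum_ind (A : {set V}) (b : pred V) :
  \sum_(v in A) (b v : nat) = #|[set v in A | b v]|.
Proof.
rewrite -sum1_card big_mkcond [RHS]big_mkcond /=; apply: eq_bigr => v _.
by rewrite !inE; case: (v \in A); case: (b v).
Qed.

Lemma edge_bound : forall S : {set V}, \sum_(v in S) down S v <= k * (#|S|.-1).
Proof.
suff H : forall m (S : {set V}), #|S| = m -> \sum_(v in S) down S v <= k * (#|S|.-1).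
  by move=> S; apply: (H #|S|).
elim=> [|m IH] S cS.
  by move: cS => /eqP; rewrite cards_eq0 => /eqP ->; rewrite big_set0.
have S0 : S != set0 by rewrite -card_gt0 cS.
have [v0 v0S degv0] := Hdeg S0.
set S' := S :\ v0.
have cS' : #|S'| = m by move: cS; rewrite (cardsD1 v0 S) v0S add1n => [[]].
rewrite (bigD1 v0 v0S) /=.
have E1 : forall v, v \in S' -> down S v = down S' v + (G v v0 && (c v0 < c v)).
  move=> v vS'; rewrite /down (cardsD1 v0 [set u in S | G v u && (c u < c v)]).
  rewrite addnC inE v0S /=; congr (_ + _).
  by apply: eq_card => u; rewrite !inE andbA.
have -> : \sum_(i in S | i != v0) down S i = \sum_(i in S') down S i.
  by apply: eq_bigl => i; rewrite !inE andbC.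
rewrite (eq_bigr _ E1) big_split /= sum_ind.
have -> : down S v0 = #|[set u in S' | G v0 u && (c u < c v0)]|.
  apply: eq_card => u; rewrite !inE.
  by case: (eqVneq u v0) => [->|]; rewrite ?Girr ?andbF.
set N := [set u in S' | G v0 u].
have HA : #|[set u in S' | G v0 u && (c u < c v0)]| = #|N :&: [set u | c u < c v0]|.
  by apply: eq_card => u; rewrite !inE andbA.
have HB : #|[set v in S' | G v v0 && (c v0 < c v)]| <= #|N :\: [set u | c u < c v0]|.
  apply: subset_leq_card; apply/subsetP => u; rewrite !inE.
  case/andP => [H1 /andP [Guv0 lt]]; rewrite H1 Gsym Guv0 -leqNgt ltnW //.
have HN : #|N :&: [set u | c u < c v0]| + #|N :\: [set u | c u < c v0]| = #|N| := cardsID _ _.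
have Nk : #|N| <= k.
  apply: leq_trans degv0; apply: subset_leq_card; apply/subsetP => u.
  by rewrite !inE => /andP [/andP [_ ->] ->].
have NS' : #|N| <= #|S'|.
  by apply: subset_leq_card; apply/subsetP => u; rewrite inE => /andP [].
have IH' := IH S' cS'.
rewrite HA cS /=; rewrite cS' in IH' NS'.
move: IH' HN HB Nk NS'.
case: m {IH cS cS'} => [|m'] /=.
  by rewrite !muln0; lia.
rewrite mulnS; lia.
Qed.

End Edge.

Lemma bern k j : k ^ j * (k + j) <= k * (k.+1) ^ j.
Proof.
elim: j => [|j IH]; first by rewrite !expn0 mul1n muln1 addn0.
rewrite !expnS.
set X := k ^ j in IH *; set Y := k.+1 ^ j in IH *.
nia.
Qed.

Lemma bern2 k : 0 < k -> 2 * k ^ k <= k.+1 ^ k.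
Proof.
move=> k0; have H := bern k k.
rewrite -(leq_pmul2l k0); move: H; set X := k ^ k; set Y := k.+1 ^ k => H.
nia.
Qed.

Lemma recQ k t : 0 < t -> forall a D : nat -> nat,
  (forall s, D s = D s.+1 + a s.+1) -> 0 < a t ->
  (forall s, 0 < s <= t -> D s + k <= k * a s) ->
  k.+1 ^ t <= k ^ t.-1 * (D 0 + k).
Proof.
elim: t => [//|t IH] _ a D HD at1 Hk.
case: t IH at1 Hk => [|t] IH at1 Hk.
  by rewrite expn1 expn0 mul1n HD; lia.
have := IH isT (fun s => a s.+1) (fun s => D s.+1) (fun s => HD s.+1) at1.
have Hk' : forall s, 0 < s <= t.+1 -> D s.+1 + k <= k * a s.+1.
  by move=> s /andP [_ hs]; apply: Hk.
move=> /(_ Hk') /= H.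
have H1 := Hk 1 isT.
rewrite HD expnS [k ^ t.+1]expnS.
move: H H1; set X := k ^ t; set Y := k.+1 ^ t.+1 => H H1.
nia.
Qed.

Lemma recR k t : 0 < t -> forall a D : nat -> nat,
  (forall s, D s = D s.+1 + a s.+1) -> 0 < a t ->
  (forall s, 0 < s <= t -> D s + k <= k * a s) ->
  k.+1 ^ t.-1 <= k ^ t.-1 * a 1.
Proof.
case: t => [//|[|t]] _ a D HD at1 Hk.
  by rewrite !expn0 mul1n.
have := @recQ k t.+1 isT (fun s => a s.+1) (fun s => D s.+1) (fun s => HD s.+1) at1.
have Hk' : forall s, 0 < s <= t.+1 -> D s.+1 + k <= k * a s.+1.
  by move=> s /andP [_ hs]; apply: Hk.
move=> /(_ Hk') /= H.
have H1 := Hk 1 isT.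
rewrite [k ^ t.+1]expnS.
move: H H1; set X := k ^ t; set Y := k.+1 ^ t.+1 => H H1.
nia.
Qed.

Lemma leq_expr a b e : a <= b -> a ^ e <= b ^ e.
Proof. by move=> ab; elim: e => [|e IH] //; rewrite !expnS leq_mul. Qed.

Lemma pow_final k m n : k.+1 ^ m <= k ^ m * n -> 2 ^ m <= n ^ k.
Proof.
case: k => [|k].
  case: m => [|m]; first by rewrite !expn0.
  by rewrite exp0n // mul0n leqNgt expn_gt0.
move=> H.
have H2 : (k.+2 ^ m) ^ k.+1 <= (k.+1 ^ m * n) ^ k.+1 by apply: leq_expr.
have E1 : (k.+2 ^ m) ^ k.+1 = (k.+2 ^ k.+1) ^ m by rewrite -!expnM mulnC.
have E2 : (k.+1 ^ m) ^ k.+1 = (k.+1 ^ k.+1) ^ m by rewrite -!expnM mulnC.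
rewrite expnMn E1 E2 in H2.
have B := bern2 (k := k.+1) isT.
have B2 : (2 * k.+1 ^ k.+1) ^ m <= (k.+2 ^ k.+1) ^ m by apply: leq_expr.
rewrite expnMn in B2.
have := leq_trans B2 H2.
by rewrite [X in _ <= X]mulnC leq_pmul2r // !expn_gt0.
Qed.

Section Grundy.
Variables (V : finType) (G : rel V) (k : nat) (C : V -> nat).
Hypothesis Gsym : symmetric G.
Hypothesis Girr : irreflexive G.
Hypothesis Hdeg : forall S : {set V}, S != set0 ->
  exists2 v, v \in S & #|[set u in S | G v u]| <= k.
Hypothesis grundy : forall j x, 0 < x < C j -> exists i, G j i /\ C i = x.

Let a s := #|[set u | s <= C u]|.
Let D s := \sum_u (C u - s).

Lemma sum_ind' (b : pred V) : \sum_u (b u : nat) = #|[set u | b u]|.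
Proof.
rewrite -sum1_card [RHS]big_mkcond /=; apply: eq_bigr => u _.
by rewrite inE; case: (b u).
Qed.

Lemma F1 s : D s = D s.+1 + a s.+1.
Proof.
rewrite /D /a -sum_ind' -big_split /=; apply: eq_bigr => u _.
by case: leqP => H; rewrite /=; lia.
Qed.

Lemma lower s v : 0 < s -> s <= C v ->
  C v - s <= down G C [set u | s <= C u] v.
Proof.
move=> s0 sv.
rewrite /down cardE -(size_iota s (C v - s)) -(size_map C).
apply: uniq_leq_size; first exact: iota_uniq.
move=> x; rewrite mem_iota => /andP [sx xlt].
have [i [Gvi Ci]] : exists i, G v i /\ C i = x by apply: grundy; lia.
rewrite -Ci; apply: map_f; rewrite mem_enum !inE Gvi Ci sx /=; lia.
Qed.

Lemma F2 s : 0 < s -> 0 < a s -> D s + k <= k * a s.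
Proof.
move=> s0 as0.
set S := [set u | s <= C u].
have E : D s = \sum_(v in S) (C v - s).
  rewrite /D [RHS]big_mkcond; apply: eq_bigr => v _; rewrite inE.
  by case: leqP => //= H; lia.
have H1 : D s <= k * #|S|.-1.
  rewrite E; apply: leq_trans (edge_bound C Gsym Girr Hdeg S).
  by apply: leq_sum => v; rewrite inE => vS; apply: lower.
rewrite /a -/S in as0 *.
move: H1 as0; case: #|S| => [//|m] /= H1 _; rewrite mulnS; lia.
Qed.

Lemma grundy_bound v : 0 < C v -> 2 ^ (C v).-1 <= #|V| ^ k.
Proof.
move=> cv.
apply: pow_final.
have a1 : a 1 <= #|V| by apply: max_card.
apply: leq_trans (leq_mul (leqnn _) a1).
apply: (recR cv (a := a) (D := D)).
- exact: F1.
- by rewrite /a card_gt0; apply/set0Pn; exists v; rewrite inE.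
- move=> s /andP [s0 st]; apply: F2 => //.
  by rewrite /a card_gt0; apply/set0Pn; exists v; rewrite inE.
Qed.

End Grundy.

Import Order.TTheory GRing.Theory Num.Theory.

Lemma real_bound (R : realType) (n k c : nat) : (0 < n)%N -> (2 ^ c.-1 <= n ^ k)%N ->
  ((c%:R : R) <= k%:R * log2 (n%:R : R) + 1)%R.
Proof.
move=> n0 H.
have ln2 : ((0 : R) < ln 2)%R by apply: ln_gt0; rewrite ltr1n.
have H1 : (((2 ^ c.-1)%:R : R) <= (n ^ k)%:R)%R by rewrite ler_nat.
rewrite !natrX in H1.
have p1 : ((0 : R) < 2%:R ^+ c.-1)%R by rewrite exprn_gt0 // ltr0n.
have p2 : ((0 : R) < n%:R ^+ k)%R by rewrite exprn_gt0 // ltr0n.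
have := H1; rewrite -ler_ln ?posrE // => H2.
rewrite !lnXn ?ltr0n // in H2.
have Hc : ((c%:R : R) <= (c.-1)%:R + 1)%R.
  by rewrite (natr1 (R:=R) (c.-1)) ler_nat; case: c {H1 H2 H p1}.
apply: (le_trans Hc); rewrite lerD2r /log2 mulrA ler_pdivlMr //.
by move: H2; rewrite -[(ln 2 *+ _)%R]mulr_natl -[(ln _ *+ k)%R]mulr_natl.
Qed.

Definition grundyp (n : nat) (G : rel 'I_n) (C : schedule n) : Prop :=
  forall j x, 0 < x < C j -> exists i, G j i /\ C i = x.

Lemma step n (G : rel 'I_n) (C : schedule n) : symmetric G -> irreflexive G ->
  feasible G C -> ~ grundyp G C ->
  exists C2 : schedule n, [/\ feasible G C2, (forall j, C2 j <= C j) &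
     \sum_j C2 j < \sum_j C j].
Proof.
move=> Gsym Girr' [Cpos Cprop] ng.
have [j [x [hx nx]]] : exists j x, 0 < x < C j /\ ~ exists i, G j i /\ C i = x.
  apply: NNPP => H; apply: ng => j x hx.
  apply: NNPP => H'; apply: H; exists j, x; split => //.
pose C2 : schedule n := fun i => if i == j then x else C i.
exists C2; split.
- split.
    by move=> i; rewrite /C2; case: (i == j) => //; case/andP: hx.
  move=> i i' Gii'; rewrite /C2.
  case: ifP => [/eqP ei | /negbT ij]; case: ifP => [/eqP ei' | /negbT i'j].
  + by subst; rewrite Girr' in Gii'.
  + subst i; apply/eqP => E; apply: nx; exists i'; split => //.
  + subst i'; rewrite Gsym in Gii'; apply/eqP => E; apply: nx; exists i; split => //.
  + exact: Cprop.
- move=> i; rewrite /C2; case: ifP => [/eqP -> | _] //; case/andP: hx => _ /ltnW //.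
- rewrite [\sum_j C2 j](bigD1 j) // [\sum_j C j](bigD1 j) //= /C2 eqxx.
  have -> : \sum_(i | i != j) (if i == j then x else C i) = \sum_(i | i != j) C i.
    by apply: eq_bigr => i /negbTE ->.
  by rewrite ltn_add2r; case/andP: hx.
Qed.

Lemma compress n (G : rel 'I_n) (C : schedule n) : symmetric G -> irreflexive G ->
  feasible G C -> exists C' : schedule n,
    [/\ feasible G C', grundyp G C' & forall j, C' j <= C j].
Proof.
move=> Gsym Girr.
suff H : forall N (C : schedule n), \sum_j C j <= N -> feasible G C ->
   exists C' : schedule n, [/\ feasible G C', grundyp G C' & forall j, C' j <= C j].
  by apply: (H _ C (leqnn _)).
elim=> [|N IH] C0 sC fC.
  case: (classic (grundyp G C0)) => g; first by exists C0.
  have [C2 [_ _ lt]] := step Gsym Girr fC g; move: lt sC; lia.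
case: (classic (grundyp G C0)) => g; first by exists C0.
have [C2 [f2 le2 lt]] := step Gsym Girr fC g.
have [C' [f' g' le']] := IH C2 ltac:(lia) f2.
by exists C'; split => // j; apply: leq_trans (le' j) (le2 j).
Qed.

Lemma bounded n (G : rel 'I_n) (C : schedule n) : irreflexive G ->
  feasible G C -> grundyp G C -> forall j, C j < n.+1.
Proof.
move=> Girr [Cpos _] g j.
have H : C j - 1 <= #|[set u | G j u]|.
  rewrite cardE -(size_iota 1 (C j - 1)) -(size_map C).
  apply: uniq_leq_size; first exact: iota_uniq.
  move=> x; rewrite mem_iota => /andP [sx xlt].
  have [i [Gji Ci]] : exists i, G j i /\ C i = x by apply: g; lia.
  by rewrite -Ci; apply: map_f; rewrite mem_enum inE.
have H2 : #|[set u | G j u]| <= #|[set~ j]|.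
  apply: subset_leq_card; apply/subsetP => u; rewrite !inE; apply: contraL => /eqP ->.
  by rewrite Girr.
rewrite cardsC1 card_ord in H2.
have H3 := leq_trans H H2.
have := Cpos j; have := ltn_ord j; lia.
Qed.

Lemma seq_min (R : realType) (X : eqType) (l : seq X) (P : X -> Prop) (r : X -> R) :
  (exists2 x, x \in l & P x) ->
  exists x, [/\ x \in l, P x & forall y, y \in l -> P y -> (r x <= r y)%R].
Proof.
elim: l => [[x] //|h l IH] Hex.
case: (classic (exists2 x, x \in l & P x)) => Hl.
  have [x [xl Px xmin]] := IH Hl.
  case: (classic (P h)) => Ph.
    case: (leP (r h) (r x)) => hx.
      exists h; split; rewrite ?mem_head // => y; rewrite inE => /orP [/eqP -> //|yl Py].
      by apply: le_trans hx _; apply: xmin.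
    exists x; split; rewrite ?inE ?xl ?orbT // => y; rewrite inE => /orP [/eqP -> _|yl Py].
      exact: ltW.
    exact: xmin.
  exists x; split; rewrite ?inE ?xl ?orbT // => y; rewrite inE => /orP [/eqP -> //|yl Py].
  exact: xmin.
have Ph : P h.
  case: Hex => x; rewrite inE => /orP [/eqP -> //|xl Px]; by case: Hl; exists x.
exists h; split; rewrite ?mem_head // => y; rewrite inE => /orP [/eqP -> //|yl Py].
by case: Hl; exists y.
Qed.

Unset Implicit Arguments.
Set Strict Implicit.
Theorem corollary2 (R : realType) (n : nat) (G : rel 'I_n)
  (f : schedule n -> R) (tw : nat) :
  simple_graph G -> regular f -> is_treewidth G tw ->
  exists C : schedule n,
    optimal G f C /\
    ((Cmax C)%:R <= tw%:R * log2 (n%:R : R) + 1)%R.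
Proof.
move=> [Gsym Girr] reg [[T [eT [B [TD tw_eq]]]] _].
have Hdeg : forall S : {set 'I_n}, S != set0 ->
    exists2 v, v \in S & #|[set u in S | G v u]| <= tw.
  by rewrite -tw_eq => S S0; apply: (degen Girr TD S0).
pose sched (g : {ffun 'I_n -> 'I_n.+1}) : schedule n := fun j => val (g j).
pose P g := feasible G (sched g) /\ grundyp G (sched g).
have toG : forall C, feasible G C -> exists g, P g /\ forall j, sched g j <= C j.
  move=> C fC; have [C' [f' g' le']] := compress Gsym Girr fC.
  have bd := bounded Girr f' g'.
  exists [ffun j => Ordinal (bd j)].
  have E : sched [ffun j => Ordinal (bd j)] = C'.
    by apply: functional_extensionality => j; rewrite /sched ffunE.
  by split; [rewrite /P E | move=> j; rewrite E].  
have C0f : feasible G (fun j : 'I_n => (val j).+1).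
  split => // i j Gij; rewrite eqSS; apply/negP => /eqP /val_inj E.
  by rewrite E Girr in Gij.
have [g1 [Pg1 _]] := toG _ C0f.
have [g0 [_ Pg0 g0min]] := seq_min (fun g => f (sched g))
   (ex_intro2 _ _ g1 (mem_enum _ g1) Pg1).
exists (sched g0); split.
  split; first by case: Pg0.
  move=> C' fC'.
  have [g [Pg le]] := toG C' fC'.
  apply: le_trans (g0min g (mem_enum _ g) Pg) _.
  apply: reg => //; [by case: Pg => [[]] | by case: fC'].
case: (posnP n) => [n0 | n0].
  subst n; rewrite /Cmax big_ord0.
  have -> : tw = 0.
    rewrite -tw_eq /td_width.
    have -> : \max_(t : T) #|B t| = 0 => //.
    apply/eqP; rewrite -leqn0; apply/bigmax_leqP => t _.
    by rewrite leqn0 cards_eq0; apply/eqP/setP => x; case: x.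
  by rewrite mul0r add0r ler01.
have [j0 Ej0] := @bigop.eq_bigmax 'I_n (fun j => sched g0 j) (ltac:(by rewrite card_ord)).
rewrite /Cmax Ej0.
apply: real_bound => //.
have := grundy_bound Gsym Girr Hdeg (proj2 Pg0) ((proj1 (proj1 Pg0)) j0).
by rewrite card_ord.
Qed.
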